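(* Let $\pi$ be a profinite group and $M$ a discrete $\pi$-module. Let $U''\subset U'\subset U$ be closed normal subgroups of $\pi$ and $G=\pi/U$, $G'=\pi/U'$, $G''=\pi/U''$. Suppose that $U$ acts trivially on $M$ and that the restriction maps $\mathrm{H}^2(\pi,M)\to\mathrm{H}^2(U,M)$, $\mathrm{H}^1(U,M)\to\mathrm{H}^1(U',M)$ and $\mathrm{H}^1(U',M)\to\mathrm{H}^1(U'',M)$ are all zero. Then the restriction of the inflation map $\mathrm{H}^2(G'',M)\to\mathrm{H}^2(\pi,M)$ to the image of the inflation map $\mathrm{H}^2(G',M)\to\mathrm{H}^2(G'',M)$ is an isomorphism onto $\mathrm{H}^2(\pi,M)$.
   Context: Cohomology is continuous cohomology of profinite groups with discrete coefficients; $M$ is regarded as a $G$-, $G'$-, $G''$-module via the quotient maps. *)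

(* Defs.v *)
From HB Require Import structures.
From mathcomp Require Import all_boot all_order all_algebra.
From mathcomp Require Import boolp classical_sets topology.
Set Implicit Arguments. Unset Strict Implicit. Unset Printing Implicit Defensive.
Import GRing.Theory.
Local Open Scope classical_set_scope.
Local Open Scope ring_scope.

Record profinite_group := ProfiniteGroup {
  pg_sort :> topologicalType;
  pg_mul : pg_sort -> pg_sort -> pg_sort;
  pg_one : pg_sort;
  pg_inv : pg_sort -> pg_sort;
  pg_mulA : associative pg_mul;
  pg_mul1g : left_id pg_one pg_mul;
  pg_mulVg : left_inverse pg_one pg_inv pg_mul;
  pg_mul_cont : continuous (fun p : pg_sort * pg_sort => pg_mul p.1 p.2);
  pg_inv_cont : continuous pg_inv;
  pg_compact : compact [set: pg_sort];
  pg_hausdorff : hausdorff_space pg_sort;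
  pg_totdisc : totally_disconnected [set: pg_sort]
}.

Section Cohomology.
Variables (G : profinite_group) (M : zmodType) (act : G -> M -> M).

Local Notation "x * y" := (pg_mul x y).

(* Discrete G-module structure on M: a group action by additive maps which is
   continuous for the discrete topology on M, i.e. each x |-> x.m is
   locally constant. *)
Definition discrete_module :=
  [/\ forall m, act (pg_one G) m = m,
      forall x y m, act (x * y) m = act x (act y m),
      forall x m1 m2, act x (m1 + m2) = act x m1 + act x m2 &
      forall m x, \forall y \near x, act y m = act x m].

Definition closed_normal_subgroup (U : set G) :=
  [/\ closed U, U (pg_one G),
      forall x y, U x -> U y -> U (x * y),
      forall x, U x -> U (pg_inv x) &
      forall g x, U x -> U (pg_inv g * (x * g))].

(* Inhomogeneous continuous cochains of the group H/N (H a closed subgroup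
   of G, N a closed normal subgroup of G contained in H, acting trivially
   on M) with values in the discrete module M, viewed as functions on H
   (resp. H x H) which are locally constant for the subspace topology and
   invariant under N.  Only values on H matter.  We only use H = G (giving
   the quotients G/N) and N = [set 1] (giving the subgroups H). *)

Definition cochain1 (H N : set G) (f : G -> M) :=
  (forall x, H x -> \forall y \near x, H y -> f y = f x) /\
  (forall x n, H x -> N n -> f (x * n) = f x).

Definition cochain2 (H N : set G) (f : G -> G -> M) :=
  (forall x y, H x -> H y ->
     \forall p \near (x, y), H p.1 -> H p.2 -> f p.1 p.2 = f x y) /\
  (forall x y n, H x -> H y -> N n ->
     f (x * n) y = f x y /\ f x (y * n) = f x y).

Definition cocycle1 (H : set G) (f : G -> M) :=
  forall x y, H x -> H y -> f (x * y) = f x + act x (f y).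

Definition coboundary1 (H : set G) (f : G -> M) :=
  exists m : M, forall x, H x -> f x = act x m - m.

Definition cocycle2 (H : set G) (f : G -> G -> M) :=
  forall x y z, H x -> H y -> H z ->
    act x (f y z) - f (x * y) z + f x (y * z) - f x y = 0.

Definition coboundary2 (H N : set G) (f : G -> G -> M) :=
  exists h : G -> M, cochain1 H N h /\
    forall x y, H x -> H y -> f x y = act x (h y) - h (x * y) + h x.

End Cohomology.

(* Main.v *)
Require Import Defs.
From mathcomp Require Import all_boot all_order all_algebra.
From mathcomp Require Import boolp classical_sets topology.
From HB Require Import structures.
From mathcomp Require Import finmap ssrAC.
Import GRing.Theory.
Local Open Scope classical_set_scope.
Local Open Scope ring_scope.

Set Implicit Arguments. Unset Strict Implicit. Unset Printing Implicit Defensive.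

Section Topo.
Variable T : topologicalType.

Definition LC {V : Type} (f : T -> V) := forall x, \forall y \near x, f y = f x.

Lemma LC_cont {V : topologicalType} (f : T -> V) : LC f -> continuous f.
Proof.
move=> Hf x B /= nB; apply: filterS (Hf x) => y /= ->; exact: nbhs_singleton.
Qed.

Lemma LC_comp {S : topologicalType} {V : Type} (g : S -> T) (f : T -> V) :
  continuous g -> LC f -> forall x, \forall y \near x, f (g y) = f (g x).
Proof. by move=> gc Hf x; exact: (gc x _ (Hf (g x))). Qed.

Lemma LC_op2 {A B C : Type} (a : T -> A) (b : T -> B) (F : A -> B -> C) :
  LC a -> LC b -> LC (fun x => F (a x) (b x)).
Proof. by move=> Ha Hb x; apply: filterS (filterI (Ha x) (Hb x)) => y [-> ->]. Qed.

Lemma LC_dep {V W : Type} (A : T -> V -> W) (b : T -> V) :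
  (forall m x, \forall y \near x, A y m = A x m) -> LC b -> LC (fun x => A x (b x)).
Proof.
by move=> HA Hb x; apply: filterS (filterI (Hb x) (HA (b x) x)) => y [-> ->].
Qed.

Lemma LC_clopen {V : Type} (f : T -> V) c : LC f -> clopen [set x | f x = c].
Proof.
move=> Hf; split.
  rewrite openE => x /= fx; apply: filterS (Hf x) => y /= ->; exact: fx.
rewrite -[X in closed X]setCK; apply: open_closedC.
rewrite openE => x /= nfx; apply: filterS (Hf x) => y /= ->; exact: nfx.
Qed.

Fixpoint sel {I V : Type} (A : I -> set T) (val : I -> V) (d : V) (s : seq I) x :=
  if s is i :: s' then (if `[< A i x >] then val i else sel A val d s' x) else d.

Lemma sel_LC {I : eqType} {V : Type} (A : I -> set T) (val : I -> V) d s :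
  (forall i, i \in s -> clopen (A i)) -> LC (sel A val d s).
Proof.
rewrite /LC; elim: s => [|i s IH] Hs x /=; first exact: filterE.
have [oA cA] := Hs i (mem_head _ _).
have IH' := IH (fun j js => Hs j (mem_behead (js : j \in behead (i :: s)))) x.
case: (pselect (A i x)) => Aix.
  rewrite asboolT //; have : nbhs x (A i) by rewrite nbhsE; exists (A i).
  by apply: filterS => y Aiy; rewrite asboolT.
rewrite asboolF //; have : nbhs x (~` A i).
  by rewrite nbhsE; exists (~` A i) => //; split => //; exact: closed_openC.
move=> nx; apply: filterS (filterI nx IH') => y [/= nAy ->].
by rewrite asboolF.
Qed.

Lemma sel_spec {I : eqType} {V : Type} (A : I -> set T) (val : I -> V) d s x :
  (exists2 i, i \in s & A i x) ->
  exists2 i, i \in s & (A i x /\ sel A val d s x = val i).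
Proof.
elim: s => [[i]//|j s IH] [i iS Aix] /=.
case: (pselect (A j x)) => Ajx.
  by rewrite asboolT //; exists j => //; rewrite mem_head.
rewrite asboolF //; have [k ks [Hk ->]] : exists2 k, k \in s & A k x /\ sel A val d s x = val k.
  apply: IH; move: iS; rewrite in_cons => /orP[/eqP ij|iS]; last by exists i.
  by move: Aix; rewrite ij.
by exists k; first (by apply/orP; right).
Qed.

Lemma sel_inv {I : eqType} {V : Type} (A : I -> set T) (val : I -> V) d s x y :
  (forall i, i \in s -> (A i y <-> A i x)) -> sel A val d s y = sel A val d s x.
Proof.
elim: s => [//|i s IH] H /=.
have [H1 H2] := H i (mem_head _ _).
rewrite IH; last by move=> j js; apply: H; rewrite in_cons js orbT.
case: (pselect (A i x)) => Aix.
  by rewrite !asboolT //; exact: H2.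
by rewrite !asboolF // => /H1.
Qed.

End Topo.


Section PT.
Variable T : topologicalType.
Variable d : T.
Definition PT : Type := T.
HB.instance Definition _ := Topological.on PT.
HB.instance Definition _ := isPointed.Build PT d.
Lemma cc (A : set T) : compact A -> @cover_compact T A.
Proof.
move=> cA; have E := @compact_cover PT.
have : @compact PT A by exact: cA.
by rewrite E.
Qed.
End PT.

Section Profin.
Variable T : topologicalType.
Hypotheses (cT : compact [set: T]) (hT : hausdorff_space T)
  (tdT : totally_disconnected [set: T]).

Definition Qc (x : T) := \bigcap_(D in [set D | clopen D /\ D x]) D.

Lemma QW x (W : set T) : open W -> Qc x `<=` W ->
  exists D, [/\ clopen D, D x & D `<=` W].
Proof.
move=> oW QcW; apply: contrapT => H.
pose F := filter_from [set D : set T | clopen D /\ D x] (fun D => D `&` ~` W).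
have FF : ProperFilter F.
  apply: filter_from_proper; last first.
    move=> D [cD Dx]; apply: contrapT => /set0P/negP; rewrite negbK => /eqP D0.
    apply: H; exists D; split => // y Dy; apply: contrapT => nWy.
    by have : (D `&` ~` W) y by []; rewrite D0.
  apply: filter_from_filter; first by exists setT; split => //; exact: clopenT.
  move=> A B [cA Ax] [cB Bx]; exists (A `&` B); first by split => //; exact: clopenI.
  by move=> y [[Ay By] nWy].
have [z [_ cz]] := cT FF (filterT).
have Qz : Qc x z.
  move=> D [[oD cD] Dx].
  have cl : closed (D `&` ~` W) by apply: closedI => //; exact: open_closedC.
  have : (D `&` ~` W) z.
    apply: cl => B nB; apply: cz => //; exists D => //.
  by case.
have [[oT cTT] Tx] : clopen [set: T] /\ [set: T] x by split => //; exact: clopenT.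
have : (setT `&` ~` W) z.
  have cl : closed (setT `&` ~` W) by apply: closedI => //; exact: open_closedC.
  apply: cl => B nB; apply: cz => //; exists setT => //.
by case=> _; apply; apply: QcW.
Qed.


Lemma clopen_split (D V1 V2 : set T) : clopen D -> open V1 -> open V2 ->
  V1 `&` V2 = set0 -> D `<=` V1 `|` V2 -> clopen (D `&` V1).
Proof.
move=> [oD cD] oV1 oV2 V12 DV; split; first exact: openI.
have -> : D `&` V1 = D `&` ~` V2.
  apply/seteqP; split => y [Dy H]; split => //.
    by move=> V2y; have : (V1 `&` V2) y by []; rewrite V12.
  by case: (DV y Dy).
by apply: closedI => //; exact: open_closedC.
Qed.

Lemma Qc_connected x : connected (Qc x).
Proof.
move=> B [b Bb] [O oO BO] [K cK BK].
have cQ : closed (Qc x) by apply: closed_bigI => D [[_ cD] _].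
pose A2 := Qc x `&` ~` O.
have cB : closed B by rewrite BK; apply: closedI.
have cA2 : closed A2 by apply: closedI => //; exact: open_closedC.
have nT := compact_normal hT cT.
have nb : set_nbhs B (~` A2).
  move=> a Ba; apply: open_nbhs_nbhs; split; first exact: closed_openC.
  by move: Ba; rewrite BO => -[Qa Oa] [_ nOa].
have [C nC clC] := nT B cB (~` A2) nb.
pose V1 := C°; pose V2 := ~` closure C.
have BV1 : B `<=` V1 by move=> a Ba; exact: nC.
have A2V2 : A2 `<=` V2 by move=> a A2a clCa; exact: (clC a clCa).
have V12 : V1 `&` V2 = set0.
  apply/seteqP; split => // y [V1y V2y]; apply: V2y.
  by apply: subset_closure; apply: interior_subset.
have QV : Qc x `<=` V1 `|` V2.
  move=> y Qy; case: (pselect (O y)) => Oy.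
    by left; apply: BV1; rewrite BO.
  by right; apply: A2V2.
have oV1 : open V1 by exact: open_interior.
have oV2 : open V2 by apply: closed_openC; exact: closed_closure.
have [D [cD Dx DV]] := QW (openU oV1 oV2) QV.
have Qx : Qc x x by move=> E [_].
case: (QV x Qx) => [V1x|V2x].
  have cD1 := clopen_split cD oV1 oV2 V12 DV.
  have QD1 : Qc x `<=` D `&` V1 by move=> y Qy; apply: Qy; split.
  rewrite BO; apply/seteqP; split => y; first by case.
  move=> Qy; split => //; apply: contrapT => nOy.
  have [_ V1y] := QD1 y Qy.
  have V2y : V2 y by apply: A2V2.
  by have : (V1 `&` V2) y by []; rewrite V12.
have cD2 : clopen (D `&` V2).
  by apply: clopen_split oV2 oV1 _ _ => //; [rewrite setIC | rewrite setUC].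
have QD2 : Qc x `<=` D `&` V2 by move=> y Qy; apply: Qy; split.
have Qb : Qc x b by move: Bb; rewrite BO; case.
have [_ V2b] := QD2 b Qb.
have V1b := BV1 b Bb.
by have : (V1 `&` V2) b by []; rewrite V12.
Qed.

Lemma clopen_nbhs x (N : set T) : open N -> N x ->
  exists D, [/\ clopen D, D x & D `<=` N].
Proof.
move=> oN Nx; apply: QW => // y Qy.
have : connected_component [set: T] x y.
  exists (Qc x) => //; split => //; [by move=> E [_]|exact: Qc_connected].
by rewrite (tdT (x:=x) I) => ->.
Qed.


Lemma extend (d0 : T) {V : Type} (d : V) (U : set T) (h : T -> V) : closed U ->
  (forall u, U u -> \forall y \near u, U y -> h y = h u) ->
  exists K : T -> V, LC K /\ forall u, U u -> K u = h u.
Proof.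
move=> cU hLC.
have : forall u, exists D : set T, U u ->
    [/\ clopen D, D u & forall y, D y -> U y -> h y = h u].
  move=> u; case: (pselect (U u)) => Uu; last by exists set0.
  have : nbhs u (fun y => U y -> h y = h u) by exact: hLC.
  rewrite nbhsE => -[N [oN Nu] NS].
  have [D [cD Du DN]] := clopen_nbhs oN Nu.
  by exists D => _; split => // y Dy Uy; apply: NS => //; apply: DN.
move=> /choice [Df HDf].
have cpU : compact U := subclosed_compact cU cT (@subsetT _ U).
move: cpU => /(cc d0) /(_ T U Df).
case.
- by move=> i Ui; have [[]] := HDf i Ui.
- by move=> u Uu; exists u => //; have [] := HDf u Uu.
move=> D' D'U0 UD'.
have D'U : forall i, i \in D' -> U i by move=> i /D'U0 /set_mem.
exists (sel Df h d (enum_fset D')); split.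
  by apply: sel_LC => i iD; have [] := HDf i (D'U i iD).
move=> u Uu; have [i iD Diu] := UD' u Uu.
have [j jD [Dju ->]] := sel_spec (A:=Df) h d (s:=enum_fset D') (ex_intro2 _ _ i iD Diu).
by have [_ _ Hj] := HDf j (D'U j jD); rewrite (Hj u Dju Uu).
Qed.

Lemma select_cover (d : T) (Z : T -> set T) :
  (forall r, clopen (Z r)) -> (forall r, Z r r) ->
  exists t : T -> T, [/\ LC t, forall x, Z (t x) x &
    forall x y, (forall r, Z r y <-> Z r x) -> t y = t x].
Proof.
move=> cZ Zr; move: cT => /(cc d) /(_ T setT Z).
case.
- by move=> i _; case: (cZ i).
- by move=> x _; exists x.
move=> D' _ TD'.
exists (sel Z id d (enum_fset D')); split.
- by apply: sel_LC => i _; exact: cZ.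
- move=> x; have [i iD Zix] := TD' x I.
  by have [j jD [Zjx ->]] := sel_spec (A:=Z) id d (s:=enum_fset D') (ex_intro2 _ _ i iD Zix).
- by move=> x y H; apply: sel_inv => i _; exact: H.
Qed.

End Profin.


Section Grp.
Variable pi : profinite_group.
Local Notation mul := (@pg_mul pi).
Local Notation inv := (@pg_inv pi).
Local Notation one := (@pg_one pi).

Lemma mulgA' x y z : mul x (mul y z) = mul (mul x y) z.
Proof. exact: pg_mulA. Qed.
Lemma mul1g' x : mul one x = x. Proof. exact: pg_mul1g. Qed.
Lemma mulVg' x : mul (inv x) x = one. Proof. exact: pg_mulVg. Qed.
Lemma mulgV' x : mul x (inv x) = one.
Proof.
rewrite -[mul x (inv x)]mul1g' -[X in mul X (mul x _)](mulVg' (inv x)).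
by rewrite -mulgA' [mul (inv x) (mul x _)]mulgA' mulVg' mul1g' mulVg'.
Qed.
Lemma mulg1' x : mul x one = x.
Proof. by rewrite -(mulVg' x) mulgA' mulgV' mul1g'. Qed.
Lemma mulKg' x y : mul (inv x) (mul x y) = y.
Proof. by rewrite mulgA' mulVg' mul1g'. Qed.
Lemma mulKVg' x y : mul x (mul (inv x) y) = y.
Proof. by rewrite mulgA' mulgV' mul1g'. Qed.

Lemma mul_cont : continuous (fun p : pi * pi => mul p.1 p.2).
Proof. exact: pg_mul_cont. Qed.
Lemma inv_cont : continuous inv.
Proof. exact: pg_inv_cont. Qed.

Lemma cont_pair {S U V : topologicalType} (f : S -> U) (g : S -> V) :
  continuous f -> continuous g -> continuous (fun s => (f s, g s)).
Proof. by move=> fc gc x; apply: cvg_pair; [exact: fc|exact: gc]. Qed.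

Lemma fst_cont {U V : topologicalType} : continuous (@fst U V).
Proof. by move=> [x y]; exact: cvg_fst. Qed.
Lemma snd_cont {U V : topologicalType} : continuous (@snd U V).
Proof. by move=> [x y]; exact: cvg_snd. Qed.

Lemma cst_cont {S U : topologicalType} (c : U) : continuous (fun _ : S => c).
Proof. by move=> x; exact: cvg_cst. Qed.

Lemma comp_cont {S U V : topologicalType} (f : S -> U) (g : U -> V) :
  continuous f -> continuous g -> continuous (fun x => g (f x)).
Proof. by move=> fc gc x; apply: continuous_comp; [exact: fc|exact: gc]. Qed.

End Grp.

Section ZM.
Variable M : zmodType.
Lemma quad_add (a1 b1 c1 d1 a2 b2 c2 d2 : M) :
  (a1 - b1 + c1 - d1) + (a2 - b2 + c2 - d2) =
  (a1 + a2) - (b1 + b2) + (c1 + c2) - (d1 + d2).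
Proof. by rewrite !opprD addrACA (addrACA (a1 - b1)) (addrACA a1). Qed.
Lemma quad_opp (a b c d : M) : - (a - b + c - d) = (- a) - (- b) + (- c) - (- d).
Proof. by rewrite !opprD !opprK. Qed.
Lemma quad_sub (a1 b1 c1 d1 a2 b2 c2 d2 : M) :
  (a1 - b1 + c1 - d1) - (a2 - b2 + c2 - d2) =
  (a1 - a2) - (b1 - b2) + (c1 - c2) - (d1 - d2).
Proof. by rewrite quad_opp quad_add. Qed.
Lemma solve_b (a b c d : M) : a - b + c - d = 0 -> b = a + c - d.
Proof.
by move/eqP; rewrite subr_eq0 => /eqP <-; rewrite [a - b + c]addrAC opprB addrCA subrr addr0.
Qed.
Lemma dd_id (a b c e f g : M) :
  (a - b + c) - (a - e + f) + (b - e + g) - (c - f + g) = 0.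
Proof.
rewrite !opprD !opprK !addrA.
rewrite (@GRing.add M).[ACl ((1*4)*(2*7)*(3*10)*(5*8)*(6*11)*(9*12))].
by rewrite ?subrr ?addNr ?addr0.
Qed.
Lemma id_f2xU (F K O : M) : F - (0 - (K - F - O) + (K - O)) = 0.
Proof.
rewrite sub0r !opprD !opprK !addrA.
rewrite (@GRing.add M).[ACl ((1*3)*(2*5)*(4*6))].
by rewrite ?subrr ?addNr ?addr0.
Qed.
Lemma id_final (F a b c a' b' c' : M) :
  F - ((F - (a - b + c)) - (a' - b' + c')) = (a + a') - (b + b') + (c + c').
Proof.
rewrite !opprD !opprK !addrA subrr add0r.
by rewrite [LHS](@GRing.add M).[ACl (1*4*2*5*3*6)].
Qed.
Lemma solve2 (a b c d : M) : c = b - a + d -> a - c = (d - c) + (b - c).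
Proof.
move=> ->; rewrite !opprD !opprK !addrA.
rewrite [RHS](@GRing.add M).[ACl ((1*4)*(5*6)*(3*2*7*8))].
by rewrite !subrr addr0 add0r.
Qed.
Lemma cancel_ab (a b d : M) : a = a - b + d -> d = b.
Proof.
move=> E; have : a + 0 = a + (- b + d) by rewrite addr0 addrA.
by move/addrI/esym; rewrite addrC => /eqP; rewrite subr_eq0 => /eqP.
Qed.
Lemma sub_eq0 (a b : M) : a - b = 0 -> a = b.
Proof. by move/eqP; rewrite subr_eq0 => /eqP. Qed.
End ZM.

Section LCZ.
Variable T : topologicalType.
Variable V : zmodType.
Lemma LC_add (a b : T -> V) : LC a -> LC b -> LC (fun x => a x + b x).
Proof. exact: (@LC_op2 T V V V a b +%R). Qed.
Lemma LC_opp (a : T -> V) : LC a -> LC (fun x => - a x).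
Proof. by move=> Ha; exact: (@LC_op2 T V V V a a (fun u _ => - u) Ha Ha). Qed.
Lemma LC_sub (a b : T -> V) : LC a -> LC b -> LC (fun x => a x - b x).
Proof. by move=> Ha Hb; apply: LC_add => //; exact: LC_opp. Qed.
Lemma LC_cst (c : V) : LC (fun _ : T => c).
Proof. by move=> x; exact: filterE. Qed.
End LCZ.

Section Coh.
Variables (pi : profinite_group) (M : zmodType) (act : pi -> M -> M).
Hypothesis Hmod : discrete_module act.
Local Notation mul := (@pg_mul pi).
Local Notation inv := (@pg_inv pi).
Local Notation one := (@pg_one pi).

Lemma act1 m : act one m = m. Proof. by case: Hmod. Qed.
Lemma actM x y m : act (mul x y) m = act x (act y m). Proof. by case: Hmod. Qed.
Lemma actD x a b : act x (a + b) = act x a + act x b. Proof. by case: Hmod. Qed.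
Lemma actLC m : LC (fun y => act y m). Proof. by case: Hmod => _ _ _ H x; exact: H. Qed.
Lemma act0 x : act x 0 = 0.
Proof. by apply: (@addrI _ (act x 0)); rewrite -actD !addr0. Qed.
Lemma actN x m : act x (- m) = - act x m.
Proof. by apply/eqP; rewrite -addr_eq0 -actD addNr act0. Qed.
Lemma actB x a b : act x (a - b) = act x a - act x b.
Proof. by rewrite actD actN. Qed.

Definition dd (k : pi -> M) x y := act x (k y) - k (mul x y) + k x.

Lemma dd_cocycle k : cocycle2 act setT (dd k).
Proof.
move=> x y z _ _ _; rewrite /dd !actD !actN -actM -mulgA'.
exact: dd_id.
Qed.

Lemma cocycle_sub f g : cocycle2 act setT f -> cocycle2 act setT g ->
  cocycle2 act setT (fun x y => f x y - g x y).
Proof.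
move=> Hf Hg x y z _ _ _; rewrite actB.
by rewrite -quad_sub (Hf x y z I I I) (Hg x y z I I I) subrr.
Qed.

Lemma cocycle_solve f x y z : cocycle2 act setT f ->
  f (mul x y) z = act x (f y z) + f x (mul y z) - f x y.
Proof. by move=> Hf; apply: solve_b; exact: Hf. Qed.

Definition LC2 (f : pi -> pi -> M) := LC (fun p : pi * pi => f p.1 p.2).

Lemma cochain2_LC2 N (f : pi -> pi -> M) : cochain2 [set: pi] N f -> LC2 f.
Proof. by move=> [Hf _] [x y]; apply: filterS (Hf x y I I) => p; apply. Qed.

Lemma LC2_cochain2 N (f : pi -> pi -> M) : LC2 f ->
  (forall x y n, N n -> f (mul x n) y = f x y /\ f x (mul y n) = f x y) ->
  cochain2 [set: pi] N f.
Proof.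
move=> Hf Hi; split; last by move=> x y n _ _; exact: Hi.
by move=> x y _ _; apply: filterS (Hf (x, y)) => p /= -> _ _.
Qed.

Lemma LC_cochain1 N (k : pi -> M) : LC k -> (forall x n, N n -> k (mul x n) = k x) ->
  cochain1 [set: pi] N k.
Proof.
move=> Hk Hi; split; last by move=> x n _; exact: Hi.
by move=> x _; apply: filterS (Hk x) => y -> _.
Qed.

Lemma lmul_cont a : continuous (fun y => mul a y).
Proof.
apply: (comp_cont (f := fun y => (a, y))) (@mul_cont pi).
by apply: cont_pair; [exact: cst_cont|move=> x; exact: cvg_id].
Qed.

Lemma dd_LC k : LC k -> LC2 (dd k).
Proof.
move=> Hk; rewrite /LC2 /dd.
apply: LC_add; first apply: LC_sub.
- apply: (LC_dep (A := fun p (m : M) => act p.1 m) (b := fun p => k p.2)).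
    by move=> m; exact: (LC_comp fst_cont (actLC m)).
  exact: (LC_comp snd_cont Hk).
- exact: (LC_comp (@mul_cont pi) Hk).
- exact: (LC_comp fst_cont Hk).
Qed.

Lemma LC2_sub f g : LC2 f -> LC2 g -> LC2 (fun x y => f x y - g x y).
Proof. by move=> Hf Hg; apply: LC_sub. Qed.


Lemma clopen_forall (U : set pi) (e : pi -> pi -> M) : closed U -> LC2 e ->
  clopen [set y | forall u, U u -> e y u = 0].
Proof.
move=> cU He.
have Hy : forall u, LC (fun y => e y u).
  move=> u; apply: (LC_comp (g := fun y => (y, u))) He.
  by apply: cont_pair; [move=> x; exact: cvg_id|exact: cst_cont].
split; last first.
  have -> : [set y | forall u, U u -> e y u = 0] =
      \bigcap_(u in U) [set y | e y u = 0].
    by apply/seteqP; split => y H u Uu; exact: H.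
  by apply: closed_bigI => u _; case: (@LC_clopen _ _ _ 0 (Hy u)).
have -> : [set y | forall u, U u -> e y u = 0] =
    ~` (fst @` ([set p : pi * pi | e p.1 p.2 <> 0] `&` (snd @^-1` U))).
  apply/seteqP; split.
    by move=> y H [[a b] [/= nz Ub] /= ay]; subst a; apply: nz; exact: H.
  move=> y nH u Uu; apply: contrapT => nz; apply: nH; exists (y, u) => //.
apply: closed_openC; apply: compact_closed; first exact: pg_hausdorff.
apply: continuous_compact; first exact: continuous_subspaceT fst_cont.
apply: (subclosed_compact _ (B := setT)).
- apply: closedI.
    have -> : [set p : pi*pi | e p.1 p.2 <> 0] = ~` [set p | e p.1 p.2 = 0] by [].
    by apply: open_closedC; case: (@LC_clopen _ _ _ 0 He).
  by apply: preimage_closed => //; move=> p _; exact: snd_cont.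
- rewrite -setXTT; apply: compact_setX; exact: pg_compact.
- by [].
Qed.


Lemma surj (U U' : set pi) :
  closed_normal_subgroup U -> closed_normal_subgroup U' -> U' `<=` U ->
  (forall u m, U u -> act u m = m) ->
  (forall f, cochain2 [set: pi] [set one] f ->
     cocycle2 act [set: pi] f -> coboundary2 act U [set one] f) ->
  (forall f, cochain1 U [set one] f -> cocycle1 act U f ->
     coboundary1 act U' f) ->
  (forall f, cochain2 [set: pi] [set one] f ->
     cocycle2 act [set: pi] f ->
     exists g, [/\ cochain2 [set: pi] U' g, cocycle2 act [set: pi] g &
       coboundary2 act [set: pi] [set one] (fun x y => f x y - g x y)]).
Proof.
move=> [cU U1 UM UV Uc] [cU' U'1 U'M U'V U'c] U'U triv H2 H1 f fc fco.
have fLC : LC2 f := cochain2_LC2 fc.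
have [h [[hLC _] hf]] := H2 f fc fco.
have [K [KLC KU]] := extend (@pg_compact pi) (@pg_hausdorff pi) (@pg_totdisc pi)
  one 0 cU hLC.
pose f1 x y := f x y - dd K x y.
have f1co : cocycle2 act setT f1 := cocycle_sub fco (dd_cocycle K).
have f1LC : LC2 f1 := LC2_sub fLC (dd_LC KLC).
have f1U : forall u v, U u -> U v -> f1 u v = 0.
  move=> u v Uu Uv; have Uuv := UM _ _ Uu Uv; rewrite /f1 /dd hf // !KU //.
  by rewrite !triv // subrr.
pose Z r := [set y | forall u, U u -> f1 (mul (inv r) y) u = 0].
have ZZ : forall r, Z r r by move=> r w Uw; rewrite mulVg'; exact: f1U.
have Zc : forall r, clopen (Z r).
  move=> r; apply: (@clopen_forall U (fun y u => f1 (mul (inv r) y) u) cU).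
  apply: (LC_comp (g := fun p : pi * pi => (mul (inv r) p.1, p.2))) f1LC.
  apply: cont_pair; last exact: snd_cont.
  move=> p; apply: (@continuous_comp _ _ _ fst (fun y => mul (inv r) y)).
    exact: fst_cont.
  exact: lmul_cont.
have Zsat : forall r y u', U u' -> Z r y -> Z r (mul y u').
  move=> r y u' Uu' Zy u Uu; rewrite mulgA' (cocycle_solve _ _ _ f1co).
  by rewrite f1U // act0 add0r !Zy ?subr0 //; exact: UM.
have [t [tLC tZ tinv]] := select_cover (@pg_compact pi) one Zc ZZ.
have tU : forall x u, U u -> t (mul x u) = t x.
  move=> x u Uu; apply: tinv => r; split; last by move=> Zx; exact: Zsat.
  move=> /(Zsat _ _ _ (UV _ Uu)).
  by rewrite -mulgA' mulgV' mulg1'.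
pose k2 x := - f1 (t x) (mul (inv (t x)) x).
have k2LC : LC k2.
  apply: LC_opp.
  apply: (LC_comp (g := fun x => (t x, mul (inv (t x)) x))) f1LC.
  apply: cont_pair; first exact: LC_cont.
  apply: (comp_cont (f := fun x => (inv (t x), x))) (@mul_cont pi).
  apply: cont_pair; last by move=> x; exact: cvg_id.
  exact: (@comp_cont _ _ _ t inv (LC_cont tLC) (@inv_cont pi)).
have key : forall x u, U u -> k2 (mul x u) = k2 x - f1 x u.
  move=> x u Uu; rewrite /k2 (tU x u Uu).
  have Zx := tZ x.
  have E : f1 x u = f1 (t x) (mul (inv (t x)) (mul x u))
                    - f1 (t x) (mul (inv (t x)) x).
    rewrite -{1}(mulKVg' (t x) x) (cocycle_solve _ _ _ f1co) Zx //.
    by rewrite act0 add0r mulgA'.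
  by rewrite E opprB addKr.
have k2U : forall u, U u -> k2 u = k2 one.
  by move=> u Uu; have := key one u Uu; rewrite mul1g' => ->; rewrite f1U // subr0.
pose k3 x := k2 x - k2 one.
have k3LC : LC k3 by apply: LC_sub => //; exact: LC_cst.
pose f2 x y := f1 x y - dd k3 x y.
have f2co : cocycle2 act setT f2 := cocycle_sub f1co (dd_cocycle k3).
have f2LC : LC2 f2 := LC2_sub f1LC (dd_LC k3LC).
have f2xU : forall x u, U u -> f2 x u = 0.
  move=> x u Uu; rewrite /f2 /dd /k3 (k2U u Uu) subrr act0 (key x u Uu).
  exact: id_f2xU.
have f2inv : forall x y u, U u -> f2 x (mul y u) = f2 x y.
  move=> x y u Uu; apply: sub_eq0.
  have := f2co x y u I I I.
  by rewrite (f2xU y u Uu) (f2xU (mul x y) u Uu) act0 subrr add0r.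
have f2conj : forall x v y, U v -> f2 x (mul v y) = f2 x y.
  move=> x v y Uv; rewrite -{1}(mulKVg' y (mul v y)) f2inv //.
  exact: Uc.
have f2U' : forall n y, U' n -> f2 n y = 0.
  move=> n y U'n.
  pose phi u := f2 u y.
  have phiLC : LC phi.
    apply: (LC_comp (g := fun u => (u, y))) f2LC.
    by apply: cont_pair; [move=> x; exact: cvg_id|exact: cst_cont].
  have phic : cochain1 U [set one] phi.
    split; first by move=> x _; apply: filterS (phiLC x) => z -> _.
    by move=> x m _ ->; rewrite mulg1'.
  have phico : cocycle1 act U phi.
    move=> u v Uu Uv; rewrite /phi triv //.
    have := f2co u v y I I I.
    rewrite (f2conj u v y Uv) (f2xU u v Uv) (triv u _ Uu) => /solve_b ->.
    by rewrite subr0 addrC.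
  have [m Hm] := H1 phi phic phico.
  by have := Hm n U'n; rewrite triv ?subrr //; apply: U'U.
exists f2; split.
- apply: LC2_cochain2 f2LC _ => x y n U'n; split; last exact: f2inv (U'U _ U'n).
  have := f2co x n y I I I.
  rewrite (f2U' n y U'n) act0 (f2xU x n (U'U _ U'n)) (f2conj x n y (U'U _ U'n)).
  by move=> /solve_b ->; rewrite add0r subr0.
- exact: f2co.
- exists (fun x => K x + k3 x); split.
    apply: LC_cochain1; first exact: LC_add.
    by move=> x n ->; rewrite mulg1'.
  by move=> x y _ _; rewrite /f2 /f1 /dd [act x (K y + _)]actD; exact: id_final.
Qed.


Lemma inj (U' U'' : set pi) :
  U'' `<=` U' -> (forall u m, U' u -> act u m = m) ->
  (forall f, cochain1 U' [set one] f -> cocycle1 act U' f ->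
     coboundary1 act U'' f) ->
  (forall g1 g2, cochain2 [set: pi] U' g1 -> cocycle2 act [set: pi] g1 ->
     cochain2 [set: pi] U' g2 -> cocycle2 act [set: pi] g2 ->
     coboundary2 act [set: pi] [set one] (fun x y => g1 x y - g2 x y) ->
     coboundary2 act [set: pi] U'' (fun x y => g1 x y - g2 x y)).
Proof.
move=> U''U' triv' H1 g1 g2 [_ g1i] g1co [_ g2i] g2co [h [[hLC _] hg]].
pose g x y := g1 x y - g2 x y.
have ginv : forall x y n, U' n -> g (mul x n) y = g x y /\ g x (mul y n) = g x y.
  move=> x y n Un; have [a1 b1] := g1i x y n I I Un.
  by have [a2 b2] := g2i x y n I I Un; rewrite /g a1 b1 a2 b2.
have gco : cocycle2 act setT g := cocycle_sub g1co g2co.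
pose c := g one one.
have gU : forall u v, U' u -> U' v -> g u v = c.
  move=> u v Uu Uv; rewrite -[u]mul1g' (ginv one v u Uu).1.
  by rewrite -[v]mul1g' (ginv one one v Uv).2.
have gx1 : forall x, g x one = act x c.
  move=> x; have := gco x one one I I I.
  by rewrite !mulg1' subrK => /sub_eq0 ->.
pose h' u := h u - c.
have h'c : cochain1 U' [set one] h'.
  split; first by move=> x _; apply: filterS (hLC x I) => y H _; rewrite /h' (H I).
  by move=> x n _ ->; rewrite /h' mulg1'.
have h'co : cocycle1 act U' h'.
  move=> u v Uu Uv; rewrite triv' //.
  have := hg u v I I; rewrite -/(g u v) gU // triv' // => E.
  by rewrite /h'; apply: solve2.
have [m Hm] := H1 h' h'c h'co.
have hU'' : forall w, U'' w -> h w = c.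
  move=> w Uw; have := Hm w Uw; rewrite triv' ?subrr; last exact: U''U'.
  by rewrite /h' => /sub_eq0.
exists h; split.
  split; first by move=> x _; apply: filterS (hLC x I) => y H _; exact: H I.
  move=> x n _ Un; have := hg x n I I.
  rewrite -[n in g1 x n]mul1g' -[n in g2 x n]mul1g'.
  have -> : g1 x (mul one n) - g2 x (mul one n) = g x one.
    by rewrite -(ginv x one n (U''U' _ Un)).2.
  by rewrite gx1 hU'' // => /cancel_ab.
by move=> x y _ _; exact: hg.
Qed.

End Coh.

Unset Implicit Arguments.

Theorem proposition4p2 (pi : profinite_group) (M : zmodType)
  (act : pi -> M -> M) (U U' U'' : set pi) :
  discrete_module act ->
  closed_normal_subgroup U -> closed_normal_subgroup U' ->
  closed_normal_subgroup U'' ->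
  U'' `<=` U' -> U' `<=` U ->
  (* U acts trivially on M *)
  (forall u m, U u -> act u m = m) ->
  (* res : H^2(pi, M) -> H^2(U, M) is zero *)
  (forall f, cochain2 [set: pi] [set pg_one pi] f ->
     cocycle2 act [set: pi] f -> coboundary2 act U [set pg_one pi] f) ->
  (* res : H^1(U, M) -> H^1(U', M) is zero *)
  (forall f, cochain1 U [set pg_one pi] f -> cocycle1 act U f ->
     coboundary1 act U' f) ->
  (* res : H^1(U', M) -> H^1(U'', M) is zero *)
  (forall f, cochain1 U' [set pg_one pi] f -> cocycle1 act U' f ->
     coboundary1 act U'' f) ->
  (* surjectivity onto H^2(pi, M) of inf_{G''}^{pi} restricted to
     the image of inf_{G'}^{G''} *)
  (forall f, cochain2 [set: pi] [set pg_one pi] f ->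
     cocycle2 act [set: pi] f ->
     exists g, [/\ cochain2 [set: pi] U' g, cocycle2 act [set: pi] g &
       coboundary2 act [set: pi] [set pg_one pi] (fun x y => f x y - g x y)])
  /\
  (* injectivity on the image of inf_{G'}^{G''} *)
  (forall g1 g2, cochain2 [set: pi] U' g1 -> cocycle2 act [set: pi] g1 ->
     cochain2 [set: pi] U' g2 -> cocycle2 act [set: pi] g2 ->
     coboundary2 act [set: pi] [set pg_one pi] (fun x y => g1 x y - g2 x y) ->
     coboundary2 act [set: pi] U'' (fun x y => g1 x y - g2 x y)).
Proof.
move=> Hmod HU HU' HU'' U''U' U'U triv H2 H1a H1b; split.
- exact: (surj Hmod HU HU' U'U triv H2 H1a).
- apply: (inj Hmod U''U' _ H1b) => u m Uu; apply: triv; exact: U'U.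
Qed.
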